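(* Let $R=K[X_1,\dots,X_d]$ be a polynomial ring over a field $K$ and let $\mathcal{F}_{ij}$ be a monomial ideal of $R$ for each $i=1,\dots,r$ and $j=1,\dots,s$. For $\mathbf{n}\in\mathbb{N}^r$ set $\mathcal{F}_j^{\mathbf{n}}=\mathcal{F}_{1j}^{n_1}\cdots\mathcal{F}_{rj}^{n_r}$. Then $\bigoplus_{\mathbf{n}\in\mathbb{N}^r}\left(\bigcap_{j=1}^s\mathcal{F}_j^{\mathbf{n}}\right)t_1^{n_1}\cdots t_r^{n_r}\subseteq R[t_1,\dots,t_r]$ is an $\mathbb{N}^r$-graded Noetherian $R$-algebra.
   Context: $t_1,\dots,t_r$ are indeterminates over $R$. *)

(* Defs.v *)
From HB Require Import structures.
From mathcomp Require Import all_boot all_order all_algebra.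
From mathcomp Require Import mpoly.
Set Implicit Arguments. Unset Strict Implicit. Unset Printing Implicit Defensive.
Import GRing.Theory.
Local Open Scope ring_scope.

Section Ideals.
Variable A : comRingType.

Definition is_ideal (I : A -> Prop) : Prop :=
  [/\ I 0, (forall x y, I x -> I y -> I (x + y)) & (forall a x, I x -> I (a * x))].

Definition ideal_span (S : A -> Prop) : A -> Prop :=
  fun f => exists l : seq (A * A),
    (forall p, p \in l -> S p.2) /\ f = \sum_(p <- l) p.1 * p.2.

Definition idealM (I J : A -> Prop) : A -> Prop :=
  ideal_span (fun f => exists a b, [/\ I a, J b & f = a * b]).

Definition idealX (I : A -> Prop) (n : nat) : A -> Prop :=
  iter n (idealM I) (fun _ => True).

Definition ideal_in (S I : A -> Prop) : Prop :=
  [/\ (forall x, I x -> S x), I 0, (forall x y, I x -> I y -> I (x + y))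
    & (forall a x, S a -> I x -> I (a * x))].

Definition noetherian_subring (S : A -> Prop) : Prop :=
  forall I : nat -> A -> Prop,
    (forall k, ideal_in S (I k)) ->
    (forall k x, I k x -> I k.+1 x) ->
    exists N, forall k, (N <= k)%N -> forall x, I k x -> I N x.

End Ideals.

Definition monomial_ideal (K : fieldType) (d : nat) (I : {mpoly K[d]} -> Prop) :=
  is_ideal I /\ forall f m, I f -> m \in msupp f -> I 'X_[m].

Definition idealXm (K : fieldType) (d r : nat) (F : 'I_r -> {mpoly K[d]} -> Prop)
  (n : 'X_{1..r}) : {mpoly K[d]} -> Prop :=
  foldr (fun i acc => idealM (idealX (F i) (n i)) acc) (fun _ => True) (enum 'I_r).

(* The multi-Rees algebra  (+)_n (cap_j F_j^n) t^n  inside R[t_1..t_r]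
   = {mpoly {mpoly K[d]}[r]} *)
Definition rees_inter (K : fieldType) (d r s : nat)
  (F : 'I_r -> 'I_s -> {mpoly K[d]} -> Prop) : {mpoly {mpoly K[d]}[r]} -> Prop :=
  fun P => forall (n : 'X_{1..r}) (j : 'I_s), idealXm (fun i => F i j) n (P@_n).

Definition R_subalgebra (R : comRingType) (r : nat) (S : {mpoly R[r]} -> Prop) :=
  [/\ forall c : R, S c%:MP,
      (forall P Q, S P -> S Q -> S (P - Q)) &
      (forall P Q, S P -> S Q -> S (P * Q))].

(* S is N^r-graded: it is the direct sum of its homogeneous components R t^n *)
Definition Nr_graded (R : comRingType) (r : nat) (S : {mpoly R[r]} -> Prop) :=
  forall P, S P -> forall n : 'X_{1..r}, S (P@_n *: 'X_[n]).

(* Main.v *)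
Require Import Defs.
From HB Require Import structures.
From mathcomp Require Import all_boot all_order all_algebra.
From mathcomp Require Import mpoly.
Local Open Scope ring_scope.

From mathcomp Require Import zify.
From Stdlib Require Import ClassicalEpsilon Classical.
Set Implicit Arguments. Unset Strict Implicit. Unset Printing Implicit Defensive.
Import Order.TTheory GRing.Theory.
Local Close Scope ring_scope.

Lemma tailmin (h : nat -> nat) m :
  exists i, m <= i /\ forall j, m <= j -> h i <= h j.
Proof.
suff H : forall v i0, m <= i0 -> h i0 <= v ->
  exists i, m <= i /\ forall j, m <= j -> h i <= h j.
  exact: (H (h m) m).
elim=> [|v IH] i0 hi0 hv.
  by exists i0; split=> // j _; move: hv; rewrite leqn0 => /eqP ->.
case: (classic (exists j, m <= j /\ h j < h i0)) => [[j [hj1 hj2]]|hn].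
  by apply: (IH j) => //; rewrite -ltnS (leq_trans hj2).
exists i0; split=> // j hj; rewrite leqNgt; apply/negP=> hlt; apply: hn.
by exists j.
Qed.

Lemma nat_subseq (h : nat -> nat) : exists psi : nat -> nat,
  (forall p q, p < q -> psi p < psi q) /\ (forall p q, p <= q -> h (psi p) <= h (psi q)).
Proof.
pose pick m := proj1_sig (constructive_indefinite_description _ (tailmin h m)).
have pickP m : m <= pick m /\ forall j, m <= j -> h (pick m) <= h j.
  exact: (proj2_sig (constructive_indefinite_description _ (tailmin h m))).
pose psi := fix f (p : nat) : nat := match p with 0 => pick 0 | p'.+1 => pick (f p').+1 end.
have psiS p : psi p < psi p.+1 by case: (pickP (psi p).+1).
have psiM p : exists m, m <= psi p /\ psi p = pick m.
  by case: p => [|p]; [exists 0 | exists (psi p).+1]; split=> //; case: (pickP _).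
have hS p : h (psi p) <= h (psi p.+1).
  case: (psiM p) => m [hm ->]; case: (pickP m) => _; apply.
  by rewrite (leq_trans hm) // ltnW.
exists psi; split.
  move=> p q pq; apply: (@homo_ltn _ psi (fun a b => a < b)) => //.
  exact: ltn_trans.
move=> p q pq; apply: (@homo_leq _ (fun k => h (psi k)) (fun a b => a <= b)) => //.
exact: leq_trans.
Qed.

Lemma dickson_seq (T : eqType) (h : T -> nat -> nat) (l : seq T) :
  exists phi : nat -> nat, (forall p q, p < q -> phi p < phi q) /\
    (forall t, t \in l -> forall p q, p <= q -> h t (phi p) <= h t (phi q)).
Proof.
elim: l => [|t0 l [phi [phi1 phi2]]].
  by exists id; split.
have [psi [psi1 psi2]] := nat_subseq (fun p => h t0 (phi p)).
exists (fun p => phi (psi p)); split.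
  by move=> p q /psi1 /phi1.
move=> t; rewrite inE => /orP[/eqP ->|tl] p q pq; first exact: psi2.
apply: phi2 => //; case: (ltngtP p q) pq => // [pq _|-> _]; last by [].
exact/ltnW/psi1.
Qed.

Lemma dickson (T : finType) (h : T -> nat -> nat) :
  exists p q, p < q /\ forall t, h t p <= h t q.
Proof.
have [phi [phi1 phi2]] := dickson_seq h (enum T).
exists (phi 0), (phi 1); split; first exact: phi1.
by move=> t; apply: phi2; rewrite ?mem_enum.
Qed.


Local Open Scope ring_scope.

Lemma dickson_mnm (d : nat) (b : nat -> 'X_{1..d}) :
  exists p q, (p < q)%N /\ (b p <= b q)%MM.
Proof.
have [p [q [pq H]]] := dickson (fun (k : 'I_d) p => b p k).
by exists p, q; split=> //; apply/mnm_lepP.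
Qed.

Lemma fin_basis (d : nat) (E : 'X_{1..d} -> Prop) :
  exists G : seq 'X_{1..d}, (forall g, g \in G -> E g) /\
    (forall b, E b -> exists2 g, g \in G & (g <= b)%MM).
Proof.
apply: NNPP => H.
have H' : forall G : seq 'X_{1..d}, (forall g, g \in G -> E g) ->
    exists b, E b /\ forall g, g \in G -> ~~ (g <= b)%MM.
  move=> G HG; apply: NNPP => H1; apply: H; exists G; split=> // b Eb.
  apply: NNPP => H2; apply: H1; exists b; split=> // g gG; apply/negP=> gb.
  by apply: H2; exists g.
pose nxt (G : seq 'X_{1..d}) : 'X_{1..d} :=
  match excluded_middle_informative
    (exists b, E b /\ forall g, g \in G -> ~~ (g <= b)%MM) with
  | left e => proj1_sig (constructive_indefinite_description _ e)
  | right _ => 0%MM end.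
have nxtP G : (forall g, g \in G -> E g) ->
    E (nxt G) /\ forall g, g \in G -> ~~ (g <= nxt G)%MM.
  move=> HG; rewrite /nxt; case: excluded_middle_informative => [e|ne].
    exact: (proj2_sig (constructive_indefinite_description _ e)).
  by case: ne; apply: H'.
pose L := fix L (p : nat) : seq 'X_{1..d} :=
  match p with 0 => [::] | p'.+1 => rcons (L p') (nxt (L p')) end.
have inv p : (forall g, g \in L p -> E g) /\
    forall k, (k < p)%N -> nxt (L k) \in L p.
  elim: p => [|p [IH1 IH2]] /=; first by split.
  split.
    move=> g; rewrite mem_rcons inE => /orP[/eqP ->|]; last exact: IH1.
    by case: (nxtP _ IH1).
  move=> k; rewrite ltnS leq_eqVlt => /orP[/eqP ->|kp].
    by rewrite mem_rcons mem_head.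
  by rewrite mem_rcons inE IH2 ?orbT.
have [p [q [pq Hpq]]] := dickson_mnm (fun p => nxt (L p)).
case: (inv q) => Iq1 Iq2.
case: (nxtP _ Iq1) => _ /(_ _ (Iq2 _ pq)).
by rewrite Hpq.
Qed.

Section Span.
Variable A : comRingType.
Implicit Types S : A -> Prop.

Lemma span0 S : ideal_span S 0.
Proof. by exists [::]; rewrite big_nil. Qed.

Lemma spanD S x y : ideal_span S x -> ideal_span S y -> ideal_span S (x + y).
Proof.
move=> [l1 [H1 ->]] [l2 [H2 ->]]; exists (l1 ++ l2); split.
  by move=> p; rewrite mem_cat => /orP[/H1|/H2].
by rewrite big_cat.
Qed.

Lemma spanM S a x : ideal_span S x -> ideal_span S (a * x).
Proof.
move=> [l [H ->]]; exists [seq (a * p.1, p.2) | p <- l]; split.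
  move=> p /mapP [q ql ->] /=; exact: H.
rewrite big_map mulr_sumr; apply: eq_bigr => p _; by rewrite mulrA.
Qed.

Lemma span_gen S x : S x -> ideal_span S x.
Proof. by move=> Sx; exists [:: (1, x)]; split; [move=> p; rewrite inE => /eqP ->|rewrite big_seq1 mul1r]. Qed.

End Span.


Lemma sum_delta n (F : nat -> nat) t0 : (t0 < n)%N ->
  (\sum_(t < n) F t * (t == t0 :> nat))%N = F t0.
Proof.
move=> lt; rewrite (bigD1 (Ordinal lt)) //= eqxx muln1 big1 ?addn0 // => i ne.
suff -> : (i == t0 :> nat) = false by rewrite muln0.
by apply/negbTE; apply: contra ne => /eqP h; apply/eqP/val_inj.
Qed.

Lemma sum_delta1 n t0 : (t0 < n)%N ->
  (\sum_(t < n) (t == t0 :> nat))%N = 1%N.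
Proof.
move=> lt; rewrite -[RHS](sum_delta (fun _ => 1%N) lt).
by apply: eq_bigr => t _; rewrite mul1n.
Qed.

Section Mono.
Variables (K : fieldType) (d : nat).
Local Notation R := {mpoly K[d]}.
Local Notation M := 'X_{1..d}.

Definition DG (g : seq M) (c : nat -> nat) : M :=
  (\big[+%MM/0%MM]_(t < size g) (nth 0%MM g t *+ c t))%MM.

Lemma DGE g c k : DG g c k = (\sum_(t < size g) nth 0%MM g t k * c t)%N.
Proof. by rewrite /DG mnm_sumE; apply: eq_bigr => t _; rewrite mulmnE. Qed.

Definition QX (g : seq M) (k : nat) (a : M) :=
  exists c : nat -> nat, (\sum_(t < size g) c t)%N = k /\ (DG g c <= a)%MM.

Lemma supp_span (S : R -> Prop) (P : M -> Prop) :
  (forall m m', P m -> P (m' + m)%MM) ->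
  (forall f m, S f -> m \in msupp f -> P m) ->
  forall f m, ideal_span S f -> m \in msupp f -> P m.
Proof.
move=> Pup HS f m [l [Hl ->]]; elim: l Hl m => [|p l IH] Hl m.
  by rewrite big_nil msupp0.
rewrite big_cons => /msuppD_le; rewrite mem_cat => /orP[|]; last first.
  by apply: IH => q ql; apply: Hl; rewrite inE ql orbT.
move/msuppM_le/allpairsP => [[m1 m2] /= [_ m2p ->]].
by apply: Pup; apply: (HS p.2) => //; apply: Hl; rewrite mem_head.
Qed.

Lemma supp_mul (x y : R) m : m \in msupp (x * y) ->
  exists m1 m2, [/\ m1 \in msupp x, m2 \in msupp y & m = (m1 + m2)%MM].
Proof. by move/msuppM_le/allpairsP => [[m1 m2] /= [h1 h2 ->]]; exists m1, m2. Qed.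

Lemma QX_up g k a a' : (a <= a')%MM -> QX g k a -> QX g k a'.
Proof. by move=> aa [c [h1 h2]]; exists c; split=> //; apply: lepm_trans aa. Qed.

Lemma decompX (F : R -> Prop) g
  (hG : forall f m, F f -> m \in msupp f -> exists2 b, b \in g & (b <= m)%MM) k :
  forall f m, idealX F k f -> m \in msupp f -> QX g k m.
Proof.
elim: k => [|k IH] f m.
  move=> _ _; exists (fun _ => 0%N); split; first by rewrite big1.
  by apply/mnm_lepP => i; rewrite DGE big1 // => t _; rewrite muln0.
rewrite /idealX iterS -/(idealX F k); apply: supp_span.
  move=> m0 m' /(QX_up _); apply; exact: lem_addl.
move=> x m0 [a [b [Fa Fb ->]]] /supp_mul [m1 [m2 [h1 h2 ->]]].
have [b0 b0g b0m] := hG _ _ Fa h1.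
have [c [c1 c2]] := IH _ _ Fb h2.
have t0s : (index b0 g < size g)%N by rewrite index_mem.
exists (fun t => c t + (t == index b0 g :> nat))%N; split.
  by rewrite big_split /= c1 (sum_delta1 t0s) addn1.
apply/mnm_lepP => i; rewrite DGE mnmDE.
under eq_bigr do rewrite mulnDr.
rewrite big_split /= (sum_delta (fun t => nth 0%MM g t i) t0s) nth_index // addnC -DGE.
by apply: leq_add; [apply: (mnm_lepP b0m) | apply: (mnm_lepP c2)].
Qed.

Lemma stepX (F : R -> Prop) k g b : F 'X_[g] -> idealX F k 'X_[b] ->
  idealX F k.+1 'X_[g + b].
Proof.
move=> Fg Fb; rewrite /idealX iterS -/(idealX F k) mpolyXD.
by apply: span_gen; exists 'X_[g], 'X_[b].
Qed.

Lemma composeX (F : R -> Prop) g (hG : forall b, b \in g -> F 'X_[b]) (c : nat -> nat) :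
  idealX F (\sum_(t < size g) c t)%N 'X_[DG g c].
Proof.
suff H : forall L, (L <= size g)%N -> idealX F (\sum_(t < L) c t)%N
    'X_[\big[+%MM/0%MM]_(t < L) (nth 0%MM g t *+ c t)%MM].
  exact: H.
elim=> [|L IH] hL; first by rewrite !big_ord0.
rewrite !big_ord_recr /= addmC addnC.
have gL : F 'X_[nth 0%MM g L] by apply: hG; rewrite mem_nth.
move: (IH (ltnW hL)); elim: (c L) => [|e IHe] h; first by rewrite mulm0n add0m.
by rewrite mulmS -addmA addSn; exact: stepX gL (IHe h).
Qed.

End Mono.


Section Fold.
Variables (K : fieldType) (d r : nat).
Local Notation R := {mpoly K[d]}.
Local Notation M := 'X_{1..d}.
Variables (F : 'I_r -> R -> Prop) (G : 'I_r -> seq M).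
Hypothesis hG1 : forall i b, b \in G i -> F i 'X_[b].
Hypothesis hG2 : forall i f m, F i f -> m \in msupp f -> exists2 b, b \in G i & (b <= m)%MM.

Implicit Types (n : 'X_{1..r}).
Definition Jl (l : seq 'I_r) (n : 'X_{1..r}) : R -> Prop :=
  foldr (fun i acc => idealM (idealX (F i) (n i)) acc) (fun _ => True) l.

Definition QL (l : seq 'I_r) (n : 'X_{1..r}) (a : M) :=
  exists c : 'I_r -> nat -> nat,
    (forall i, i \in l -> (\sum_(t < size (G i)) c i t)%N = n i) /\
    (\big[+%MM/0%MM]_(i <- l) DG (G i) (c i) <= a)%MM.

Lemma Jl0 l n : Jl l n 0.
Proof. by case: l => [|i l] //=; exact: span0. Qed.

Lemma JlD l n x y : Jl l n x -> Jl l n y -> Jl l n (x + y).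
Proof. by case: l => [|i l] //=; exact: spanD. Qed.

Lemma JlM l n a x : Jl l n x -> Jl l n (a * x).
Proof. by case: l => [|i l] //=; exact: spanM. Qed.

Lemma JlB l n x y : Jl l n x -> Jl l n y -> Jl l n (x - y).
Proof. by move=> hx hy; rewrite -mulN1r; apply: JlD => //; apply: JlM. Qed.

Lemma QL_up l n a a' : (a <= a')%MM -> QL l n a -> QL l n a'.
Proof. by move=> aa [c [h1 h2]]; exists c; split=> //; apply: lepm_trans aa. Qed.

Lemma lem0 (a : M) : (0 <= a)%MM.
Proof. by apply/mnm_lepP => i; rewrite mnm0E. Qed.

Lemma lem_addD (a b a' b' : M) : (a <= a')%MM -> (b <= b')%MM -> (a + b <= a' + b')%MM.
Proof.
move=> /mnm_lepP h1 /mnm_lepP h2; apply/mnm_lepP => i; rewrite !mnmDE.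
exact: leq_add.
Qed.

Lemma decompL l n : uniq l -> forall f m, Jl l n f -> m \in msupp f -> QL l n m.
Proof.
elim: l => [|i l IH] /=.
  move=> _ f m _ _; exists (fun _ _ => 0%N); split=> //.
  by rewrite big_nil; apply: lem0.
move=> /andP [il ul]; apply: supp_span.
  move=> m0 m' /(QL_up _); apply; exact: lem_addl.
move=> x m0 [a [b [Fa Fb ->]]] /supp_mul [m1 [m2 [h1 h2 ->]]].
have [ci [ci1 ci2]] := decompX (hG2 (i:=i)) Fa h1.
have [c [c1 c2]] := IH ul _ _ Fb h2.
exists (fun i' => if i' == i then ci else c i'); split.
  move=> i'; rewrite inE; case: eqP => [-> _|_ /= ]; first by rewrite ci1.
  exact: c1.
rewrite big_cons eqxx; apply: lem_addD => //.
rewrite (eq_big_seq (fun i' => DG (G i') (c i'))) // => i' i'l.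
by case: eqP => // e; move: il; rewrite -e i'l.
Qed.

Lemma composeL l n (c : 'I_r -> nat -> nat) :
  (forall i, i \in l -> (\sum_(t < size (G i)) c i t)%N = n i) ->
  Jl l n 'X_[\big[+%MM/0%MM]_(i <- l) DG (G i) (c i)].
Proof.
elim: l => [|i l IH] //= hc.
rewrite big_cons mpolyXD; apply: span_gen.
exists 'X_[DG (G i) (c i)], 'X_[\big[+%MM/0%MM]_(i <- l) DG (G i) (c i)]; split=> //.
  rewrite -(hc i (mem_head _ _)); apply: composeX => b; exact: hG1.
by apply: IH => i' i'l; apply: hc; rewrite inE i'l orbT.
Qed.

Lemma Jl_X l n a : QL l n a -> Jl l n 'X_[a].
Proof.
move=> [c [c1 c2]]; rewrite -(submK c2) mpolyXD; apply: JlM.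
exact: composeL.
Qed.

Lemma Jl_char l n f : uniq l ->
  Jl l n f <-> (forall m, m \in msupp f -> QL l n m).
Proof.
move=> ul; split; first by move=> Jf m; apply: decompL.
move=> H; rewrite (mpolyE f) big_seq; apply: big_ind.
- exact: Jl0.
- exact: JlD.
move=> m ms; rewrite -mul_mpolyC; apply: JlM; apply: Jl_X; exact: H.
Qed.

Lemma QL_add l n1 n2 a1 a2 : QL l n1 a1 -> QL l n2 a2 -> QL l (n1 + n2)%MM (a1 + a2)%MM.
Proof.
move=> [c [c1 c2]] [e [e1 e2]].
exists (fun i t => c i t + e i t)%N; split.
  by move=> i il; rewrite big_split /= c1 // e1 // mnmDE.
apply: lepm_trans (lem_addD c2 e2); apply/mnm_lepP => k.
rewrite mnmDE !mnm_sumE -big_split /=; apply: eq_leq; apply: eq_bigr => i _.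
rewrite !DGE -big_split /=; apply: eq_bigr => t _; by rewrite mulnDr.
Qed.

Lemma QL_0 l a : QL l 0%MM a.
Proof.
exists (fun _ _ => 0%N); split; first by move=> i _; rewrite big1 // mnm0E.
apply: lepm_trans (lem0 a); apply/mnm_lepP => k; rewrite mnm_sumE mnm0E big1 // => i _.
by rewrite DGE big1 // => t _; rewrite muln0.
Qed.

End Fold.


Section Lead.
Variables (R0 : comNzRingType) (n : nat).
Lemma mlead_le_of (p : {mpoly R0[n]}) m :
  (forall b, (m < b)%O -> p@_b = 0) -> (mlead p <= m)%O.
Proof.
move=> H; have [->|nz] := eqVneq p 0; first by rewrite mlead0 le0x.
rewrite leNgt; apply/negP => /H h; move: nz; rewrite -mleadc_eq0 h.
by rewrite eqxx.
Qed.

Lemma mlead_lt_of (p : {mpoly R0[n]}) m : p != 0 ->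
  (forall b, (m < b)%O -> p@_b = 0) -> p@_m = 0 -> (mlead p < m)%O.
Proof.
move=> nz H h; rewrite lt_neqAle mlead_le_of // andbT.
by apply/eqP => e; move: nz; rewrite -mleadc_eq0 e h eqxx.
Qed.
End Lead.

Section Main.
Variables (K : fieldType) (d r s : nat).
Local Notation R := {mpoly K[d]}.
Local Notation A := {mpoly R[r]}.
Local Notation M := 'X_{1..d}.
Variables (F : 'I_r -> 'I_s -> R -> Prop) (G : 'I_r -> 'I_s -> seq M).
Hypothesis hG1 : forall i j b, b \in G i j -> F i j 'X_[b].
Hypothesis hG2 : forall i j f m, F i j f -> m \in msupp f ->
  exists2 b, b \in G i j & (b <= m)%MM.

Local Notation J j n := (Jl (fun i => F i j) (enum 'I_r) n).
Local Notation Q j n := (QL (fun i => G i j) (enum 'I_r) n).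
Local Notation S := (rees_inter F).

Lemma Jchar j n f : J j n f <-> (forall m, m \in msupp f -> Q j n m).
Proof. apply: Jl_char; [move=> i b; exact: hG1 | move=> i; exact: hG2 | exact: enum_uniq]. Qed.

Lemma JM j n1 n2 x y : J j n1 x -> J j n2 y -> J j (n1 + n2)%MM (x * y).
Proof.
move=> /Jchar h1 /Jchar h2; apply/Jchar => m /supp_mul [m1 [m2 [i1 i2 ->]]].
by apply: QL_add; [apply: h1 | apply: h2].
Qed.

Lemma J_all j f : J j 0%MM f.
Proof. by apply/Jchar => m _; apply: QL_0. Qed.

Lemma S_const (c : R) : S c%:MP.
Proof.
rewrite /rees_inter => n j; rewrite mcoeffC; case: eqP => [->|_].
  exact: J_all.
by rewrite mulr0; apply: Jl0.
Qed.

Lemma S_sub P P' : S P -> S P' -> S (P - P').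
Proof. by move=> h1 h2; rewrite /rees_inter => n j; rewrite mcoeffB; apply: JlB; [exact: h1 | exact: h2]. Qed.

Lemma S_mul P P' : S P -> S P' -> S (P * P').
Proof.
move=> h1 h2; rewrite /rees_inter => n j; rewrite mcoeffM; apply: big_ind.
- exact: Jl0.
- exact: JlD.
move=> k /eqP e; have := JM (h1 k.1 j) (h2 k.2 j); by rewrite -e.
Qed.

Lemma S_graded P : S P -> forall n, S (P@_n *: 'X_[n]).
Proof.
move=> h n; rewrite /rees_inter => m j; rewrite mcoeffZ mcoeffX; case: eqP => [<-|_].
  by rewrite mulr1; apply: h.
by rewrite mulr0; apply: Jl0.
Qed.

Definition mono (n : 'X_{1..r}) (a : M) : A := 'X_[a] *: 'X_[n].

Lemma S_mono n a : (forall j, J j n 'X_[a]) -> S (mono n a).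
Proof.
move=> h; rewrite /rees_inter => m j; rewrite mcoeffZ mcoeffX; case: eqP => [<-|_].
  by rewrite mulr1; apply: h.
by rewrite mulr0; apply: Jl0.
Qed.

Definition lp (P : A) : 'X_{1..r} * M := (mlead P, mlead (mleadc P)).

Definition ltp (x y : 'X_{1..r} * M) :=
  (x.1 < y.1)%O || ((x.1 == y.1) && (x.2 < y.2)%O).

Lemma ltp_wf : well_founded ltp.
Proof.
move=> [x1 x2]; elim/(@ltmwf r): x1 x2 => x1 IH1 x2.
elim/(@ltmwf d): x2 => x2 IH2; constructor => -[y1 y2] /orP[h|/andP[/eqP /= e h]].
  exact: IH1.
by rewrite /= e; apply: IH2.
Qed.

Lemma lp_red (f g : A) : f != 0 -> g != 0 -> lp f = lp g ->
  let c := mleadc (mleadc f) / mleadc (mleadc g) in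
  let h := f - (c%:MP : R) *: g in h = 0 \/ ltp (lp h) (lp f).
Proof.
move=> nzf nzg [e1 e2] c h.
have hc m : h@_m = f@_m - c%:MP * g@_m by rewrite /h mcoeffB mcoeffZ.
have [->|nzh] := eqVneq h 0; [by left | right].
have hle : (mlead h <= mlead f)%O.
  apply: mlead_le_of => b lt; rewrite hc !mcoeff_gt_mlead ?mulr0 ?subr0 //.
  by rewrite -e1.
rewrite /ltp /=; move: hle; rewrite le_eqVlt => /orP[/eqP eh|->//].
rewrite eh eqxx /=.
have nzu : mleadc h != 0 by rewrite mleadc_eq0.
have nzgl : mleadc g != 0 by rewrite mleadc_eq0.
have nzgll : mleadc (mleadc g) != 0 by rewrite mleadc_eq0.
move: nzu; rewrite eh hc => nzu.
rewrite ltxx /=; apply: mlead_lt_of => //.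
  move=> b lt; rewrite mcoeffB mcoeffCM (mcoeff_gt_mlead lt).
  rewrite (@mcoeff_gt_mlead _ _ (g@_(mlead f))) ?mulr0 ?subr0 //.
  by rewrite e1 -e2.
have eg : g@_(mlead f) = mleadc g by rewrite e1.
have eg2 : (mleadc g)@_(mlead (mleadc f)) = mleadc (mleadc g) by rewrite e2.
by rewrite mcoeffB mcoeffCM eg eg2 /c divfK // subrr.
Qed.

Lemma mono_neq0 n a : mono n a != 0.
Proof.
apply/eqP => /(congr1 (mcoeff n)); rewrite mcoeffZ mcoeffX eqxx mulr1 mcoeff0.
move/(congr1 (mcoeff a)); rewrite mcoeffX eqxx mcoeff0 => /eqP.
by rewrite oner_eq0.
Qed.

Lemma lp_mono (g : A) n a : g != 0 ->
  mono n a * g != 0 /\ lp (mono n a * g) = ((n + (lp g).1)%MM, (a + (lp g).2)%MM).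
Proof.
move=> nzg; have nzm := mono_neq0 n a.
split; first by rewrite mulf_neq0.
have hXa : ('X_[a] : R) != 0.
  apply/eqP => /(congr1 (mcoeff a)); rewrite mcoeffX eqxx mcoeff0 => /eqP.
  by rewrite oner_eq0.
have lm : mlead (mono n a) = n by rewrite /mono mleadZ // mleadXm.
rewrite /lp mleadM // lm /=; congr (_, _).
have -> : (n + mlead g)%MM = (mlead (mono n a) + mlead g)%MM by rewrite lm.
rewrite mleadcM lm /mono mcoeffZ mcoeffX eqxx mulr1 mleadM ?mleadXm //.
by rewrite mleadc_eq0.
Qed.


Definition Dj j (c : 'I_r -> nat -> nat) : M :=
  (\big[+%MM/0%MM]_(i <- enum 'I_r) DG (G i j) (c i))%MM.

Lemma sumnB_le n (e f : nat -> nat) : (forall t, (t < n)%N -> (e t <= f t)%N) ->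
  (\sum_(t < n) (f t - e t))%N = ((\sum_(t < n) f t) - (\sum_(t < n) e t))%N.
Proof.
move=> h; have -> : (\sum_(t < n) f t = \sum_(t < n) (f t - e t) + \sum_(t < n) e t)%N.
  by rewrite -big_split /=; apply: eq_bigr => t _; rewrite subnK // h.
by rewrite addnK.
Qed.

Lemma wqo (x : nat -> 'X_{1..r} * M) :
  (forall p, exists g, S g /\ g != 0 /\ lp g = x p) ->
  exists p q, (p < q)%N /\ ((x p).1 <= (x q).1)%MM /\ ((x p).2 <= (x q).2)%MM /\
    S (mono ((x q).1 - (x p).1) ((x q).2 - (x p).2)).
Proof.
move=> H.
have HQ : forall p j, Q j (x p).1 (x p).2.
  move=> p j; case: (H p) => g [Sg [nz <-]]; rewrite /lp /=.
  have : J j (mlead g) (mleadc g) := Sg (mlead g) j.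
  by move/Jchar; apply; rewrite mlead_supp // mleadc_eq0.
pose C p j := proj1_sig (constructive_indefinite_description _ (HQ p j)).
have CP p j : (forall i, i \in enum 'I_r ->
      (\sum_(t < size (G i j)) C p j i t)%N = (x p).1 i) /\
    (Dj j (C p j) <= (x p).2)%MM.
  exact: (proj2_sig (constructive_indefinite_description _ (HQ p j))).
pose B := (\max_(ij : 'I_r * 'I_s) size (G ij.1 ij.2))%N.
pose T := ('I_r + 'I_d + ('I_s * 'I_r * 'I_B) + ('I_s * 'I_d))%type.
pose h (t : T) (p : nat) : nat := match t with
  | inl (inl (inl i)) => (x p).1 i
  | inl (inl (inr k)) => (x p).2 k
  | inl (inr jit) => C p jit.1.1 jit.1.2 jit.2
  | inr jk => ((x p).2 jk.2 - Dj jk.1 (C p jk.1) jk.2)%N end.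
have [p [q [pq Hd]]] := dickson h.
have hn i : ((x p).1 i <= (x q).1 i)%N := Hd (inl (inl (inl i))).
have ha k : ((x p).2 k <= (x q).2 k)%N := Hd (inl (inl (inr k))).
have he j k : ((x p).2 k - Dj j (C p j) k <= (x q).2 k - Dj j (C q j) k)%N :=
  Hd (inr (j, k)).
have hc j i t : (t < size (G i j))%N -> (C p j i t <= C q j i t)%N.
  move=> lt; have ltB : (t < B)%N.
    by apply: leq_trans lt _; apply: (leq_bigmax (F := fun ij : 'I_r * 'I_s => size (G ij.1 ij.2)) (i, j)).
  exact: (Hd (inl (inr (j, i, Ordinal ltB)))).
exists p, q; split=> //; split; first by apply/mnm_lepP.
split; first by apply/mnm_lepP.
apply: S_mono => j.
apply: (Jl_X (G := fun i => G i j)); first by move=> i b; exact: hG1.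
exists (fun i t => C q j i t - C p j i t)%N; split.
  move=> i il; rewrite sumnB_le; last by move=> t; apply: hc.
  by rewrite mnmBE (proj1 (CP p j) i il) (proj1 (CP q j) i il).
apply/mnm_lepP => k; rewrite mnmBE.
have hsum : ((Dj j (fun i t => C q j i t - C p j i t)%N) k + Dj j (C p j) k =
    Dj j (C q j) k)%N.
  rewrite /Dj !mnm_sumE -big_split /=; apply: eq_bigr => i _.
  rewrite !DGE -big_split /=; apply: eq_bigr => t _.
  by rewrite -mulnDr subnK // hc.
have h1 := mnm_lepP (proj2 (CP p j)) k.
have h2 := mnm_lepP (proj2 (CP q j)) k.
have h3 := he j k; have h4 := ha k.
move: hsum h1 h2 h3 h4.
set u := Dj j _ k; set v := Dj j (C p j) k; set w := Dj j (C q j) k.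
move=> *; lia.
Qed.

Lemma noeth : noetherian_subring S.
Proof.
move=> I hI hinc.
have monoI k k' : (k <= k')%N -> forall x, I k x -> I k' x.
  move=> kk'; rewrite -(subnKC kk'); elim: (k' - k)%N => [|e IH] x; first by rewrite addn0.
  by move=> /IH; rewrite addnS; apply: hinc.
pose LP k z := exists g, I k g /\ g != 0 /\ lp g = z.
have LPmono k k' z : (k <= k')%N -> LP k z -> LP k' z.
  by move=> kk' [g [Ig [nz e]]]; exists g; split=> //; apply: monoI Ig.
have LPup k z y1 y2 : LP k z -> S (mono y1 y2) -> LP k ((y1 + z.1)%MM, (y2 + z.2)%MM).
  move=> [g [Ig [nz <-]]] Sm; have [nz' e'] := lp_mono y1 y2 nz.
  exists (mono y1 y2 * g); split=> //.
  by case: (hI k) => _ _ _; apply.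
case: (classic (exists N, forall k, (N <= k)%N -> forall z, LP k z -> LP N z)) => [[N HN]|HN].
  exists N => k kN.
  suff Hs : forall z f, I k f -> f != 0 -> lp f = z -> I N f.
    move=> f If; case: (eqVneq f 0) => [->|nz]; first by case: (hI N).
    exact: Hs If nz erefl.
  elim/(well_founded_induction ltp_wf) => z IH f If nz ez.
  have [g [Ig [nzg eg]]] := HN k kN z (ex_intro _ f (conj If (conj nz ez))).
  have efg : lp f = lp g by rewrite ez eg.
  have [cl1 cl0 clD clM] := hI N.
  have [kl1 kl0 klD klM] := hI k.
  set c := mleadc (mleadc f) / mleadc (mleadc g).
  have Icg : I N ((c%:MP : R) *: g) by rewrite -mul_mpolyC; apply: clM => //; apply: S_const.
  have Ih : I k (f - (c%:MP : R) *: g).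
    rewrite -scaleNr -mul_mpolyC; apply: klD => //; apply: klM.
      rewrite -rmorphN; exact: S_const.
    exact: monoI kN _ Ig.
  have [h0|nzh] := eqVneq (f - (c%:MP : R) *: g) 0.
    by move/eqP: h0; rewrite subr_eq0 => /eqP e; rewrite e.
  case: (lp_red nz nzg efg) => /= [h0|lt]; first by rewrite h0 eqxx in nzh.
  have IhN : I N (f - (c%:MP : R) *: g) by apply: (IH (lp (f - (c%:MP : R) *: g))) => //; rewrite -ez.
  by rewrite -(subrK ((c%:MP : R) *: g) f); apply: clD.
have HN' : forall N, exists kz : nat * ('X_{1..r} * M),
    (N <= kz.1)%N /\ LP kz.1 kz.2 /\ ~ LP N kz.2.
  move=> N; apply: NNPP => H1; apply: HN; exists N => k kN z Lz.
  by apply: NNPP => nL; apply: H1; exists (k, z).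
pose nxt N := proj1_sig (constructive_indefinite_description _ (HN' N)).
have nxtP N : (N <= (nxt N).1)%N /\ LP (nxt N).1 (nxt N).2 /\ ~ LP N (nxt N).2.
  exact: (proj2_sig (constructive_indefinite_description _ (HN' N))).
pose Ns := fix f (p : nat) : nat := match p with 0 => 0%N | p'.+1 => (nxt (f p')).1 end.
pose x p := (nxt (Ns p)).2.
have NsS p : (Ns p <= Ns p.+1)%N by case: (nxtP (Ns p)).
have NsM : {homo Ns : a b / (a <= b)%N >-> (a <= b)%N}.
  by apply: (@homo_leq _ Ns (fun a b => (a <= b)%N)) => //; exact: leq_trans.
have xL p : LP (Ns p.+1) (x p) by case: (nxtP (Ns p)) => _ [].
have xN p : ~ LP (Ns p) (x p) by case: (nxtP (Ns p)) => _ [].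
have [p [q [pq [le1 [le2 Sm]]]]] : exists p q, (p < q)%N /\ ((x p).1 <= (x q).1)%MM /\
    ((x p).2 <= (x q).2)%MM /\ S (mono ((x q).1 - (x p).1) ((x q).2 - (x p).2)).
  apply: wqo => p; case: (xL p) => g [Ig [nz e]]; exists g; split=> //.
  by case: (hI (Ns p.+1)) => sub _ _ _; apply: sub.
exfalso; apply: (xN q); apply: (LPmono _ _ _ (NsM _ _ pq)).
have := LPup _ _ _ _ (xL p) Sm; rewrite !submK //.
by case: (x q).
Qed.

End Main.


Unset Implicit Arguments.

Theorem proposition6p1 (K : fieldType) (d r s : nat)
  (F : 'I_r -> 'I_s -> {mpoly K[d]} -> Prop)
  (hF : forall i j, monomial_ideal (F i j)) :
  [/\ R_subalgebra (rees_inter F), Nr_graded (rees_inter F)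
    & noetherian_subring (rees_inter F)].
Proof.
have hG : forall (i : 'I_r) (j : 'I_s), exists G : seq 'X_{1..d},
    (forall g, g \in G -> F i j 'X_[g]) /\
    (forall b, F i j 'X_[b] -> exists2 g, g \in G & (g <= b)%MM).
  by move=> i j; apply: (fin_basis (fun b => F i j 'X_[b])).
pose G i j := proj1_sig (constructive_indefinite_description _ (hG i j)).
have GP i j := proj2_sig (constructive_indefinite_description _ (hG i j)).
have hG1 : forall i j b, b \in G i j -> F i j 'X_[b].
  by move=> i j b; case: (GP i j) => h _; apply: h.
have hG2 : forall i j f m, F i j f -> m \in msupp f ->
    exists2 b, b \in G i j & (b <= m)%MM.
  move=> i j f m Ff ms; case: (GP i j) => _; apply.
  by case: (hF i j) => _; apply; first exact: Ff.
split.
- rewrite /R_subalgebra; split.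
  + exact: (S_const hG1 hG2).
  + exact: S_sub.
  + exact: (S_mul hG1 hG2).
- rewrite /Nr_graded; exact: S_graded.
- exact: (noeth hG1 hG2).
Qed.
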